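(* Let $d>1$ be a non-integer rational number and $\mu\ge\lceil d\rceil-1$ an integer. Then for every relation $R\in\{\le,<,\ge,>,=,\neq\}$, the discounted-sum comparator with discount factor $d$ for $R$ over the alphabet $\{0,\dots,\mu\}\times\{0,\dots,\mu\}$ — i.e. the set of pairs $(A,B)$ of sequences in $\{0,\dots,\mu\}^\omega$ with $\mathrm{DS}(A,d)\,R\,\mathrm{DS}(B,d)$ — is not $\omega$-regular (not accepted by any B\''uchi automaton reading $A$ and $B$ synchronously).
   Context: $\mathrm{DS}(A,d)=\sum_{i\ge0}A[i]/d^i$ for an infinite sequence $A$ and $d>1$. *)

(* Defs.v *)
From Stdlib Require Import Reals List.
Open Scope R_scope.

Definition DS_is (A : nat -> nat) (d : R) (s : R) : Prop :=
  infinite_sum (fun i => INR (A i) / d ^ i) s.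

Inductive cmp_rel := Rle_c | Rlt_c | Rge_c | Rgt_c | Req_c | Rneq_c.

Definition interp (R0 : cmp_rel) (x y : R) : Prop :=
  match R0 with
  | Rle_c => x <= y
  | Rlt_c => x < y
  | Rge_c => x >= y
  | Rgt_c => x > y
  | Req_c => x = y
  | Rneq_c => x <> y
  end.

Record Buchi (Sigma : Type) := {
  state : Type;
  state_finite : exists l : list state, forall q, In q l;
  init : state -> Prop;
  delta : state -> Sigma -> state -> Prop;
  acc : state -> Prop
}.
Arguments state {Sigma}.
Arguments init {Sigma}.
Arguments delta {Sigma}.
Arguments acc {Sigma}.

Definition buchi_accepts {Sigma : Type} (M : Buchi Sigma) (w : nat -> Sigma) : Prop :=
  exists r : nat -> state M,
    init M (r 0%nat) /\
    (forall i, delta M (r i) (w i) (r (S i))) /\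
    (forall n, exists m, (n <= m)%nat /\ acc M (r m)).

Definition in_alphabet (mu : nat) (w : nat -> nat * nat) : Prop :=
  forall i, (fst (w i) <= mu)%nat /\ (snd (w i) <= mu)%nat.

Definition DS_comparator (mu : nat) (d : R) (R0 : cmp_rel) (w : nat -> nat * nat) : Prop :=
  in_alphabet mu w /\
  exists a b, DS_is (fun i => fst (w i)) d a /\ DS_is (fun i => snd (w i)) d b /\ interp R0 a b.

Definition omega_regular (mu : nat) (L : (nat -> nat * nat) -> Prop) : Prop :=
  exists M : Buchi (nat * nat),
    forall w, in_alphabet mu w -> (buchi_accepts M w <-> L w).

(* Main.v *)
Require Import Defs.
From Stdlib Require Import Reals ZArith List Lia Lra FinFun ClassicalEpsilon.
From Coquelicot Require Import Coquelicot.
Open Scope R_scope.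

Definition splice (W : nat -> nat * nat) (n m : nat) : nat -> nat * nat :=
  fun i => if Nat.ltb i n then W i else W (i - n + m)%nat.

Section PA.
Variable M : Buchi (nat * nat).
Variable W : nat -> nat * nat.

Definition Reach (n : nat) (q : state M) : Prop :=
  exists r : nat -> state M, init M (r 0%nat) /\
    (forall i, (i < n)%nat -> delta M (r i) (W i) (r (S i))) /\ r n = q.

Definition accFrom (q : state M) (m : nat) : Prop :=
  exists r : nat -> state M, r 0%nat = q /\
    (forall i, delta M (r i) (W (i + m)%nat) (r (S i))) /\
    (forall N, exists k, (N <= k)%nat /\ acc M (r k)).

Lemma acc_splice n m :
  buchi_accepts M (splice W n m) <-> exists q, Reach n q /\ accFrom q m.
Proof.
  split.
  - intros [r [H0 [Hd Ha]]]. exists (r n). split.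
    + exists r. split; [exact H0|]. split; [|reflexivity].
      intros i Hi. specialize (Hd i). unfold splice in Hd.
      destruct (Nat.ltb_spec i n); [exact Hd| lia].
    + exists (fun i => r (i + n)%nat). split; [reflexivity|]. split.
      * intros i. specialize (Hd (i + n)%nat). unfold splice in Hd.
        destruct (Nat.ltb_spec (i+n) n); [lia|].
        replace (i + n - n + m)%nat with (i + m)%nat in Hd by lia. exact Hd.
      * intros N. destruct (Ha (N + n)%nat) as [k [Hk Hak]].
        exists (k - n)%nat. split; [lia|]. replace (k - n + n)%nat with k by lia. exact Hak.
  - intros [q [[r1 [H0 [Hd1 Hn]]] [r2 [H20 [Hd2 Ha2]]]]].
    exists (fun i => if Nat.ltb i n then r1 i else r2 (i - n)%nat). split; [|split].
    + destruct (Nat.ltb_spec 0 n); [exact H0|]. replace n with 0%nat in Hn by lia.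
      simpl. rewrite H20, <- Hn. exact H0.
    + intros i. unfold splice. destruct (Nat.ltb_spec i n); destruct (Nat.ltb_spec (S i) n).
      * apply Hd1; lia.
      * replace (S i - n)%nat with 0%nat by lia. rewrite H20. replace n with (S i) in Hn by lia.
        rewrite <- Hn. apply Hd1; lia.
      * lia.
      * replace (S i - n)%nat with (S (i - n)) by lia. specialize (Hd2 (i - n)%nat). exact Hd2.
    + intros N. destruct (Ha2 N) as [k [Hk Hak]]. exists (k + n)%nat. split; [lia|].
      destruct (Nat.ltb_spec (k+n) n); [lia|]. replace (k + n - n)%nat with k by lia. exact Hak.
Qed.

Definition bP (P : Prop) : bool := if excluded_middle_informative P then true else false.

Fixpoint allbl (n : nat) : list (list bool) :=
  match n with
  | O => nil :: nil
  | S n => map (cons true) (allbl n) ++ map (cons false) (allbl n)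
  end.

Lemma allbl_len n : length (allbl n) = (2 ^ n)%nat.
Proof. induction n; simpl; auto. rewrite length_app, !length_map. lia. Qed.

Lemma allbl_in n (x : list bool) : length x = n -> In x (allbl n).
Proof.
  revert x; induction n; intros x Hx.
  - destruct x; [left; reflexivity| discriminate].
  - destruct x as [|b x]; [discriminate|]. simpl in Hx. simpl. apply in_or_app.
    destruct b; [left|right]; apply in_map; apply IHn; lia.
Qed.

Lemma map_eq_in {A B} (f g : A -> B) l : map f l = map g l -> forall x, In x l -> f x = g x.
Proof.
  induction l; simpl; intros H x Hx; [contradiction|]. injection H as H1 H2.
  destruct Hx as [<-|Hx]; auto.
Qed.

Lemma no_dist (Q : nat -> nat -> Prop) :
  (forall n m, buchi_accepts M (splice W n m) <-> Q n m) ->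
  (forall n n', n <> n' -> exists m, ~ (Q n m <-> Q n' m)) -> False.
Proof.
  intros HQ Hdist.
  destruct (state_finite _ M) as [l Hl].
  set (code := fun n => map (fun q => bP (Reach n q)) l).
  assert (Hinj : Injective code).
  { intros n n' Hc. destruct (Nat.eq_dec n n') as [|Hne]; [assumption|exfalso].
    destruct (Hdist n n' Hne) as [m Hm]. apply Hm.
    assert (HR : forall q, Reach n q <-> Reach n' q).
    { intros q. pose proof (map_eq_in _ _ _ Hc q (Hl q)) as E. unfold bP in E.
      destruct (excluded_middle_informative (Reach n q));
      destruct (excluded_middle_informative (Reach n' q)); try discriminate; tauto. }
    rewrite <- !HQ, !acc_splice. split; intros [q [H1 H2]]; exists q; split; auto;
    apply HR; auto. }
  set (K := S (2 ^ length l)).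
  assert (H := @NoDup_incl_length _ (map code (seq 0 K)) (allbl (length l))
     (Injective_map_NoDup Hinj (seq_NoDup K 0))).
  rewrite length_map, length_seq, allbl_len in H. apply (Nat.lt_irrefl (2 ^ length l)).
  apply H. intros x Hx. apply in_map_iff in Hx. destruct Hx as [n [<- _]].
  apply allbl_in. unfold code. rewrite length_map. reflexivity.
Qed.
End PA.

Fixpoint psum (f : nat -> R) (K : nat) : R :=
  match K with O => 0 | S K => psum f K + f K end.

Lemma sum_psum f n : sum_f_R0 f n = psum f (S n).
Proof. induction n; simpl; [lra|]. rewrite IHn. simpl. reflexivity. Qed.

Lemma conv_lemma (d : R) (f : nat -> R) (L C : R) (K0 : nat) :
  1 < d -> 0 < C ->
  (forall K, (K >= K0)%nat -> Rabs (psum f K - L) <= C / d ^ K) -> infinite_sum f L.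
Proof.
  intros Hd HC H eps He.
  destruct (Pow_x_infinity d ltac:(rewrite Rabs_pos_eq; lra) (C / eps + 1)) as [N HN].
  exists (Nat.max N K0). intros n Hn. unfold R_dist. rewrite sum_psum.
  assert (Hp : 0 < d ^ S n) by (apply pow_lt; lra).
  specialize (HN (S n) ltac:(lia)). rewrite Rabs_pos_eq in HN by lra.
  eapply Rle_lt_trans; [apply H; lia|].
  assert (C / eps < d ^ S n) by lra.
  apply Rmult_lt_reg_r with (d ^ S n); [lra|].
  unfold Rdiv. rewrite Rmult_assoc, Rinv_l by lra. rewrite Rmult_1_r.
  apply Rmult_lt_reg_r with (/ eps); [apply Rinv_0_lt_compat; lra|].
  replace (eps * d ^ S n * / eps) with (d ^ S n) by (field; lra). exact H0.
Qed.

Lemma DS_exists (d : R) (mu : nat) (f : nat -> nat) :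
  1 < d -> (forall i, (f i <= mu)%nat) -> exists s, DS_is f d s.
Proof.
  intros Hd Hf.
  assert (E : ex_series (fun i => INR (f i) / d ^ i)).
  { apply (ex_series_le (V := R_CompleteNormedModule)) with (b := fun i => INR mu * (/ d) ^ i).
    - intros n. simpl. idtac.
      rewrite Rabs_pos_eq.
      + rewrite pow_inv. unfold Rdiv. apply Rmult_le_compat_r.
        * apply Rlt_le, Rinv_0_lt_compat, pow_lt; lra.
        * apply le_INR, Hf.
      + apply Rmult_le_pos; [apply pos_INR|]. apply Rlt_le, Rinv_0_lt_compat, pow_lt; lra.
    - apply (ex_series_scal (V := R_NormedModule) (INR mu) (fun i => (/ d) ^ i)).
      apply ex_series_geom. rewrite Rabs_pos_eq.
      + rewrite <- Rinv_1; apply Rinv_1_lt_contravar; lra.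
      + apply Rlt_le, Rinv_0_lt_compat; lra. }
  destruct E as [s Hs]. exists s. unfold DS_is. apply is_series_Reals. exact Hs.
Qed.

Section PC.
Variables (d : R) (p q : Z) (mu : nat).
Hypothesis Hdpq : d = IZR p / IZR q.
Hypothesis Hq : (2 <= q)%Z.
Hypothesis Hg : Z.gcd p q = 1%Z.
Hypothesis Hd1 : 1 < d.
Hypothesis Hz : forall z, IZR z <= d -> (z <= Z.of_nat mu)%Z.

Fixpoint E n := match n with O => d | S n => d * (E n - IZR (Int_part (E n))) end.
Definition D n := match n with O => 0 | S k => E k end.
Definition W i : nat * nat := match i with O => (1%nat, 0%nat) | S k => (0%nat, Z.to_nat (Int_part (E k))) end.
Definition cW i := INR (fst (W i)) - INR (snd (W i)).

Lemma E_bound n : 0 <= E n <= d.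
Proof.
  induction n; simpl; [lra|]. destruct (base_Int_part (E n)). split; nra.
Qed.

Lemma floor_bound k : (0 <= Int_part (E k))%Z /\ (Int_part (E k) <= Z.of_nat mu)%Z.
Proof.
  destruct (base_Int_part (E k)). destruct (E_bound k). split.
  - assert (IZR (Int_part (E k)) > -1) by lra. apply lt_IZR in H3. lia.
  - apply Hz. lra.
Qed.

Lemma cW_S k : cW (S k) = - IZR (Int_part (E k)).
Proof.
  unfold cW; simpl. rewrite INR_IZR_INZ, Z2Nat.id by apply floor_bound. lra.
Qed.

Lemma D_rec k : D (S k) = d * (D k + cW k).
Proof.
  destruct k; simpl.
  - unfold cW; simpl. lra.
  - rewrite cW_S. simpl. ring.
Qed.

Lemma D_bound k : 0 <= D k <= d.
Proof. destruct k; simpl; [lra|apply E_bound]. Qed.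

Lemma E_frac n : exists m, E n * IZR q ^ (S n) = IZR m /\ ~ (q | m)%Z.
Proof.
  assert (Hq0 : IZR q <> 0) by (apply not_0_IZR; lia).
  assert (Hqp : ~ (q | p)%Z).
  { intros Hd. assert (H1 : (q | 1)%Z) by (rewrite <- Hg; apply Z.gcd_greatest; [exact Hd| apply Z.divide_refl]).
    apply Z.divide_1_r in H1. lia. }
  induction n.
  - exists p. split; [simpl; rewrite Hdpq; field; auto| exact Hqp].
  - destruct IHn as [m [Hm Hnd]].
    exists (p * (m - Int_part (E n) * q ^ Z.of_nat (S n)))%Z. split.
    + simpl E. rewrite mult_IZR, minus_IZR, mult_IZR, <- pow_IZR.
      rewrite <- Hm, Hdpq. simpl. field. auto.
    + intros Hdv. apply Z.gauss in Hdv; [|rewrite Z.gcd_comm; exact Hg].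
      apply Hnd. replace m with ((m - Int_part (E n) * q ^ Z.of_nat (S n)) + Int_part (E n) * q ^ Z.of_nat (S n))%Z by ring.
      apply Z.divide_add_r; [exact Hdv|]. apply Z.divide_mul_r.
      rewrite Nat2Z.inj_succ, Z.pow_succ_r by lia. apply Z.divide_mul_l, Z.divide_refl.
Qed.

Lemma E_nz k : E k <> 0.
Proof.
  intros H0. destruct (E_frac k) as [m [Hm Hnd]]. rewrite H0, Rmult_0_l in Hm.
  apply eq_IZR in Hm. subst m. apply Hnd. apply Z.divide_0_r.
Qed.

Lemma E_inj_lt i j : (i < j)%nat -> E i <> E j.
Proof.
  intros Hij Heq. destruct (E_frac i) as [mi [Hmi _]]. destruct (E_frac j) as [mj [Hmj Hnd]].
  assert (Hc : IZR mj = IZR (mi * q ^ Z.of_nat (j - i))).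
  { rewrite mult_IZR, <- pow_IZR, <- Hmj, <- Hmi, Heq, Rmult_assoc, <- pow_add.
    f_equal. f_equal. lia. }
  apply eq_IZR in Hc. apply Hnd. rewrite Hc. apply Z.divide_mul_r.
  replace (Z.of_nat (j - i)) with (Z.succ (Z.of_nat (j - i - 1))) by lia.
  rewrite Z.pow_succ_r by lia. apply Z.divide_mul_l, Z.divide_refl.
Qed.

Lemma D_inj i j : i <> j -> D i <> D j.
Proof.
  intros Hne. destruct i as [|i], j as [|j]; simpl.
  - congruence.
  - intros H; apply (E_nz j); auto.
  - apply E_nz.
  - destruct (Nat.lt_total i j) as [H|[H|H]].
    + apply E_inj_lt; auto.
    + congruence.
    + intros H'. apply (E_inj_lt j i); auto.
Qed.

Lemma W_alpha i : (fst (W i) <= mu)%nat /\ (snd (W i) <= mu)%nat.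
Proof.
  assert (H1 : (1 <= Z.of_nat mu)%Z) by (apply Hz; lra).
  destruct i; simpl; split; try lia.
  destruct (floor_bound i). lia.
Qed.

Lemma psum_W K : psum (fun i => cW i / d ^ i) K * d ^ K = D K.
Proof.
  induction K; cbn [psum pow]; [simpl; lra|].
  rewrite D_rec, <- IHK. field. apply pow_nonzero. lra.
Qed.

Definition cV n m i := INR (fst (splice W n m i)) / d ^ i - INR (snd (splice W n m i)) / d ^ i.

Lemma psum_V_lo n m K : (K <= n)%nat -> psum (cV n m) K = psum (fun i => cW i / d ^ i) K.
Proof.
  induction K; simpl; intros H; [reflexivity|]. rewrite IHK by lia.
  unfold cV, splice, cW. destruct (Nat.ltb_spec K n); [|lia]. field. apply pow_nonzero; lra.
Qed.

Lemma psum_V_hi n m j : psum (cV n m) (n + j) * d ^ (n + j) = (D n - D m) * d ^ j + D (m + j).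
Proof.
  induction j.
  - rewrite Nat.add_0_r, Nat.add_0_r, psum_V_lo by lia. rewrite psum_W. simpl. ring.
  - rewrite !Nat.add_succ_r. cbn [psum pow]. rewrite D_rec.
    replace ((D n - D m) * (d * d ^ j)) with (d * ((D n - D m) * d ^ j)) by ring.
    replace ((D n - D m) * d ^ j) with (psum (cV n m) (n + j) * d ^ (n + j) - D (m + j)) by (rewrite IHj; ring).
    unfold cV, splice, cW. destruct (Nat.ltb_spec (n + j) n); [lia|].
    replace (n + j - n + m)%nat with (m + j)%nat by lia. simpl pow.
    field. apply pow_nonzero; lra.
Qed.

Lemma DS_diff n m a b :
  DS_is (fun i => fst (splice W n m i)) d a -> DS_is (fun i => snd (splice W n m i)) d b ->
  a - b = (D n - D m) / d ^ n.
Proof.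
  intros Ha Hb. unfold DS_is in *. apply is_series_Reals in Ha, Hb.
  pose proof (is_series_minus _ _ _ _ Ha Hb) as H.
  assert (H2 : infinite_sum (cV n m) ((D n - D m) / d ^ n)).
  { apply conv_lemma with (d := d) (C := d) (K0 := n); try lra.
    intros K HK. replace K with (n + (K - n))%nat by lia.
    assert (Hp : 0 < d ^ (n + (K - n))) by (apply pow_lt; lra).
    assert (Hp2 : 0 < d ^ n) by (apply pow_lt; lra).
    assert (E1 : psum (cV n m) (n + (K - n)) - (D n - D m) / d ^ n = D (m + (K - n)) / d ^ (n + (K - n))).
    { apply Rmult_eq_reg_r with (d ^ (n + (K - n))); [|lra].
      assert (Hp3 : 0 < d ^ (K - n)) by (apply pow_lt; lra).
      rewrite Rmult_minus_distr_r, psum_V_hi, pow_add. field. split; lra. }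
    rewrite E1. destruct (D_bound (m + (K - n))).
    rewrite Rabs_pos_eq; [|apply Rmult_le_pos; [lra| apply Rlt_le, Rinv_0_lt_compat; lra]].
    unfold Rdiv. apply Rmult_le_compat_r; [apply Rlt_le, Rinv_0_lt_compat; lra| lra]. }
  apply is_series_Reals in H2.
  assert (H' : is_series (cV n m) (a - b)) by exact H.
  apply is_series_unique in H', H2. congruence.
Qed.

Lemma cmp_iff R0 n m :
  DS_comparator mu d R0 (splice W n m) <-> Defs.interp R0 (D n) (D m).
Proof.
  assert (Hal : in_alphabet mu (splice W n m)).
  { intros i. unfold splice. destruct (i <? n)%nat; apply W_alpha. }
  destruct (DS_exists d mu (fun i => fst (splice W n m i)) Hd1 (fun i => proj1 (Hal i))) as [a Ha].
  destruct (DS_exists d mu (fun i => snd (splice W n m i)) Hd1 (fun i => proj2 (Hal i))) as [b Hb].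
  assert (Hp : 0 < d ^ n) by (apply pow_lt; lra).
  assert (key : forall a b, DS_is (fun i => fst (splice W n m i)) d a ->
     DS_is (fun i => snd (splice W n m i)) d b -> (Defs.interp R0 a b <-> Defs.interp R0 (D n) (D m))).
  { intros a0 b0 Ha0 Hb0. pose proof (DS_diff n m a0 b0 Ha0 Hb0) as Hdf.
    assert (Hx : D n - D m = (a0 - b0) * d ^ n) by (rewrite Hdf; field; lra).
    destruct R0; simpl; split; intros; nra. }
  split.
  - intros [_ [a0 [b0 [Ha0 [Hb0 Hi]]]]]. apply (key a0 b0); auto.
  - intros Hi. split; [exact Hal|]. exists a, b. split; [exact Ha|]. split; [exact Hb|].
    apply (key a b); auto.
Qed.

Lemma splice_alpha n m : in_alphabet mu (splice W n m).
Proof. intros i. unfold splice. destruct (i <? n)%nat; apply W_alpha. Qed.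
End PC.

Theorem theorem7 (d : R) (mu : nat)
  (Hd1 : 1 < d)
  (Hrat : exists p q : Z, (0 < q)%Z /\ d = IZR p / IZR q)
  (Hnonint : forall z : Z, d <> IZR z)
  (Hmu : forall c : Z, IZR c - 1 < d <= IZR c -> (c - 1 <= Z.of_nat mu)%Z) :
  forall R0 : cmp_rel, ~ omega_regular mu (DS_comparator mu d R0).
Proof.
  intros R0 [M HM].
  destruct Hrat as [p [q [Hq0 Hdq]]].
  destruct (Z.gcd_divide_l p q) as [p' Hp'].
  destruct (Z.gcd_divide_r p q) as [q' Hq'].
  assert (Hg0 : (0 < Z.gcd p q)%Z).
  { pose proof (Z.gcd_nonneg p q). destruct (Z.eq_dec (Z.gcd p q) 0) as [H0|H0]; [|lia].
    apply Z.gcd_eq_0 in H0. lia. }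
  assert (Hg : Z.gcd p' q' = 1%Z).
  { pose proof (Z.gcd_div_gcd p q (Z.gcd p q) ltac:(lia) eq_refl) as H.
    assert (E1 : (p / Z.gcd p q = p')%Z) by (rewrite Hp' at 1; apply Z.div_mul; lia).
    assert (E2 : (q / Z.gcd p q = q')%Z) by (rewrite Hq' at 1; apply Z.div_mul; lia).
    rewrite E1, E2 in H. exact H. }
  set (g := Z.gcd p q) in *. clearbody g.
  assert (Hq'0 : (0 < q')%Z) by nia.
  assert (Hdq' : d = IZR p' / IZR q').
  { rewrite Hdq, Hp', Hq', !mult_IZR. field. split; apply not_0_IZR; lia. }
  assert (Hq2 : (2 <= q')%Z).
  { destruct (Z.eq_dec q' 1) as [E1|E1]; [|lia]. exfalso. apply (Hnonint p').
    rewrite Hdq', E1. field. }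
  assert (Hz : forall z, IZR z <= d -> (z <= Z.of_nat mu)%Z).
  { intros z Hzd. destruct (archimed d) as [A1 A2].
    assert (IZR z < IZR (up d)) by (pose proof (Hnonint z); lra).
    apply lt_IZR in H.
    assert (IZR (up d) - 1 <> d) by (rewrite <- minus_IZR; intros E; apply (Hnonint (up d - 1)%Z); auto).
    assert (Hc := Hmu (up d) ltac:(lra)). lia. }
  apply (no_dist M (W d) (fun n m => Defs.interp R0 (D d n) (D d m))).
  - intros n m. rewrite HM by (eapply splice_alpha; eassumption).
    eapply cmp_iff; eassumption.
  - intros n n' Hne. assert (HD : D d n <> D d n') by (eapply D_inj; eassumption).
    destruct (Rlt_or_le (D d n) (D d n')) as [Hl|Hl].
    + destruct R0; simpl.
      * exists n. lra.
      * exists n'. lra.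
      * exists n'. lra.
      * exists n. lra.
      * exists n. lra.
      * exists n. lra.
    + assert (Hl' : D d n' < D d n) by lra.
      destruct R0; simpl.
      * exists n'. lra.
      * exists n. lra.
      * exists n. lra.
      * exists n'. lra.
      * exists n. lra.
      * exists n. lra.
Qed.
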